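(* Let $f:X\to Y$ be a continuous map admitting a continuous section $s:Y\to X$ ($f\circ s=\mathrm{id}_Y$) such that for each $y\in Y$, $s(y)$ belongs to every open subset $U\subseteq X$ with $U\cap f^{-1}(y)\neq\emptyset$. Then $f\in\{M\}^{lr}$; equivalently, for every topological space $B$ and every closed subset $A\subseteq B$, the inclusion $A\hookrightarrow B$ has the left lifting property with respect to $f$. Here $M:D\to E$ is the map with $D=\{x,y,z,c\}$ having open sets $\emptyset,\{x,y,z\},D$, $E=\{u,v\}$ antidiscrete, $M(x)=M(y)=u$, $M(z)=M(c)=v$.
   Context: For continuous maps $f:A\to B$, $g:C\to D'$, $f\pitchfork g$ (left lifting property of $f$ with respect to $g$) means: for all continuous $t:A\to C$, $b:B\to D'$ with $g\circ t=b\circ f$ there is continuous $d:B\to C$ with $d\circ f=t$, $g\circ d=b$. For a class $P$, $P^l=\{f: f\pitchfork g\ \forall g\in P\}$, $P^r=\{g: f\pitchfork g\ \forall f\in P\}$, $P^{lr}=(P^l)^r$. *)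

(* Defs.v *)
From HB Require Import structures.
From mathcomp Require Import all_boot all_order all_algebra.
From mathcomp Require Import all_classical all_reals all_analysis.

Set Implicit Arguments.
Unset Strict Implicit.
Unset Printing Implicit Defensive.

Local Open Scope classical_set_scope.

Definition llp {A B C D' : topologicalType} (f : A -> B) (g : C -> D') : Prop :=
  forall (t : A -> C) (b : B -> D'), continuous t -> continuous b ->
    g \o t = b \o f ->
    exists d : B -> C, [/\ continuous d, d \o f = t & g \o d = b].

(** The space D = {x,y,z,c}, encoded as bool * bool with
    x = (false,false), y = (false,true), z = (true,false), c = (true,true);
    open sets: set0, {x,y,z}, D. *)
Definition Dsp : Type := (bool * bool)%type.
HB.instance Definition _ := Choice.on Dsp.

Definition Dxyz : set Dsp := [set p | p <> (true, true)].
Definition Dop : set_system Dsp :=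
  [set U | U = set0 \/ U = Dxyz \/ U = setT].

Lemma DopT : Dop setT. Proof. by right; right. Qed.

Lemma DopI : setI_closed Dop.
Proof.
move=> U V [->|[->|->]] [->|[->|->]];
  rewrite ?set0I ?setI0 ?setIT ?setTI ?setIid;
  by [left | right; left | right; right].
Qed.

Lemma Dop_bigU (I : Type) (f : I -> set Dsp) :
  (forall i, Dop (f i)) -> Dop (\bigcup_i f i).
Proof.
move=> fop.
case: (pselect (exists i, f i = setT)) => [[i fi]|nT].
  right; right; apply/seteqP; split => // p _; exists i => //; by rewrite fi.
case: (pselect (exists i, f i = Dxyz)) => [[i fi]|nV].
  right; left; apply/seteqP; split.
    move=> p [j _ fjp]; have [fj|[fj|fj]] := fop j.
    - by move: fjp; rewrite fj.
    - by move: fjp; rewrite fj.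
    - by exfalso; apply: nT; exists j.
  by move=> p Vp; exists i => //; rewrite fi.
left; apply/seteqP; split => // p [j _ fjp]; have [fj|[fj|fj]] := fop j.
- by move: fjp; rewrite fj.
- by exfalso; apply: nV; exists j.
- by exfalso; apply: nT; exists j.
Qed.

HB.instance Definition _ := isOpenTopological.Build Dsp DopT DopI Dop_bigU.

(** The antidiscrete space E = {u,v}, encoded as bool (u = false, v = true). *)
Definition Esp : Type := bool.
HB.instance Definition _ := Choice.on Esp.

Definition Eop : set_system Esp := [set U | U = set0 \/ U = setT].

Lemma EopT : Eop setT. Proof. by right. Qed.

Lemma EopI : setI_closed Eop.
Proof.
move=> U V [->|->] [->|->]; rewrite ?set0I ?setI0 ?setIT ?setTI;
  by [left | right].
Qed.

Lemma Eop_bigU (I : Type) (f : I -> set Esp) :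
  (forall i, Eop (f i)) -> Eop (\bigcup_i f i).
Proof.
move=> fop.
case: (pselect (exists i, f i = setT)) => [[i fi]|nT].
  right; apply/seteqP; split => // p _; exists i => //; by rewrite fi.
left; apply/seteqP; split => // p [j _ fjp]; have [fj|fj] := fop j.
- by move: fjp; rewrite fj.
- by exfalso; apply: nT; exists j.
Qed.

HB.instance Definition _ := isOpenTopological.Build Esp EopT EopI Eop_bigU.

Definition M (p : Dsp) : Esp := p.1.

Definition in_M_l {A B : topologicalType} (f : A -> B) : Prop :=
  continuous f /\ llp f M.

Definition in_M_lr {C D' : topologicalType} (g : C -> D') : Prop :=
  continuous g /\
  forall (A B : topologicalType) (f : A -> B), in_M_l f -> llp f g.

(* Main.v *)
Require Import Defs.
From HB Require Import structures.
From mathcomp Require Import all_boot all_order all_algebra.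
From mathcomp Require Import all_classical all_reals all_analysis.

Local Open Scope classical_set_scope.

Lemma core (X Y A B : topologicalType) (f : X -> Y) (s : Y -> X) (g : A -> B) :
  continuous s -> (forall y, f (s y) = y) ->
  (forall (y : Y) (U : set X), open U -> (U `&` f @^-1` [set y]) !=set0 ->
     U (s y)) ->
  injective g -> (forall F : set A, closed F -> closed (g @` F)) ->
  llp g f.
Proof.
move=> cs fs hU ginj gcl t b ct cb e.
have e' : forall a, f (t a) = b (g a) by move=> a; exact: (congr1 (fun h => h a) e).
pose d (x : B) : X := match pselect (exists a, g a = x) with
  | left h => t (projT1 (cid h)) | right _ => s (b x) end.
have dg : forall a, d (g a) = t a.
  move=> a; rewrite /d; case: pselect => [h|n]; last by exfalso; apply: n; exists a.
  by case: (cid h) => a' /= /ginj ->.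
have dn : forall x, ~ (exists a, g a = x) -> d x = s (b x).
  by move=> x n; rewrite /d; case: pselect.
exists d; split.
- apply/continuousP => U oU.
  have -> : d @^-1` U = b @^-1` (s @^-1` U) `&` ~` (g @` (~` (t @^-1` U))).
    apply/seteqP; split => x /=.
    + move=> Dx; split.
        case: (pselect (exists a, g a = x)) => [[a ga]|n]; last by rewrite -dn.
        subst x; rewrite dg in Dx; apply: hU => //; exists (t a); split => //; exact: e'.
      by move=> [a na gax]; subst x; rewrite dg in Dx.
    + move=> [Wx nK].
      case: (pselect (exists a, g a = x)) => [[a ga]|n]; last by rewrite dn.
      subst x; rewrite dg; case: (pselect (U (t a))) => // nt.
      by exfalso; apply: nK; exists a.
  apply: openI.
    by move/continuousP: cb; apply; move/continuousP: cs; apply.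
  apply: closed_openC; apply: gcl; apply: open_closedC.
  by move/continuousP: ct; apply.
- by apply/funext => a /=; rewrite dg.
- apply/funext => x /=.
  case: (pselect (exists a, g a = x)) => [[a ga]|n]; last by rewrite dn.
  by subst x; rewrite dg e'.
Qed.

Lemma Mleft_inj (A B : topologicalType) (g : A -> B) : llp g M -> injective g.
Proof.
move=> hg a1 a2 e.
pose t' (a : A) : Dsp := (false, `[< a = a1 >]).
have ct : continuous t'.
  apply/continuousP => U [->|[->|->]].
  - by rewrite preimage_set0; exact: open0.
  - have -> : t' @^-1` Dxyz = setT by apply/seteqP; split => // a _.
    exact: openT.
  - by rewrite preimage_setT; exact: openT.
have cb : continuous (fun _ : B => false : Esp) by move=> x; apply: cst_continuous.
have [d' [_ dg _]] := hg t' (fun _ => false) ct cb (erefl _).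
have h1 : d' (g a1) = t' a1 by exact: (congr1 (fun h => h a1) dg).
have h2 : d' (g a2) = t' a2 by exact: (congr1 (fun h => h a2) dg).
rewrite -e h1 /t' in h2; case: h2 => H.
have : `[< a2 = a1 >] by rewrite -H; apply/asboolP.
by move/asboolP.
Qed.

Lemma openDxyz : open Dxyz.
Proof. exact: (or_intror (or_introl erefl)). Qed.

Lemma Mleft_closed (A B : topologicalType) (g : A -> B) : llp g M ->
  forall F : set A, closed F -> closed (g @` F).
Proof.
move=> hg F cF.
have ginj := @Mleft_inj A B g hg.
pose t' (a : A) : Dsp := (`[< F a >], `[< F a >]).
have ct : continuous t'.
  apply/continuousP => U [->|[->|->]].
  - by rewrite preimage_set0; exact: open0.
  - have -> : t' @^-1` Dxyz = ~` F.
      apply/seteqP; split => a /=.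
        by move=> H Fa; apply: H; rewrite /t' asboolT.
      by move=> nF; rewrite /t' asboolF.
    exact: closed_openC.
  - by rewrite preimage_setT; exact: openT.
pose b' (x : B) : Esp := `[< exists a, F a /\ g a = x >].
have cb : continuous b'.
  apply/continuousP => U [->|->].
  - by rewrite preimage_set0; exact: open0.
  - by rewrite preimage_setT; exact: openT.
have e : M \o t' = b' \o g.
  apply/funext => a; rewrite /M /b' /t' /=; congr asbool; apply/propext; split.
    by move=> Fa; exists a.
  by move=> [a' [Fa' /ginj <-]].
have [d' [cd dg Md]] := hg t' b' ct cb e.
have -> : g @` F = ~` (d' @^-1` Dxyz).
  apply/seteqP; split => x /=.
    move=> [a Fa <-] H; apply: H.
    have -> : d' (g a) = t' a by exact: (congr1 (fun h => h a) dg).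
    by rewrite /t' asboolT.
  move=> nD; have hx : d' x = (true, true).
    by move: nD; case: (d' x) => [[] []] //= H; exfalso; apply: H.
  have := congr1 (fun h => h x) Md; rewrite /= hx /b' /M /=.
  by move/esym/asboolP => [a [Fa <-]]; exists a.
apply: open_closedC; move/continuousP: cd; apply; exact: openDxyz.
Qed.

Lemma setval_closed (B : topologicalType) (A : set B) : closed A ->
  forall F : set (set_type A), closed F -> closed (set_val @` F).
Proof.
move=> cA F cF.
have [W oW hW] := closed_openC cF.
have -> : set_val @` F = A `&` ~` W.
  apply/seteqP; split => x /=.
    move=> [a Fa <-]; split; first exact: (set_mem (valP a)).
    move=> Wa; have : (~` F) a by rewrite -hW.
    by [].
  move=> [Ax nW]; exists (@exist _ _ x (mem_set Ax)) => //.
  apply: contrapT => nF.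
  have : (set_val @^-1` W) (@exist _ _ x (mem_set Ax)) by rewrite hW.
  by [].
apply: closedI => //; exact: open_closedC.
Qed.

Theorem mainTheorem7 (X Y : topologicalType) (f : X -> Y) (s : Y -> X) :
  continuous f -> continuous s -> (forall y, f (s y) = y) ->
  (forall (y : Y) (U : set X), open U -> (U `&` f @^-1` [set y]) !=set0 ->
     U (s y)) ->
  in_M_lr f /\
  (forall (B : topologicalType) (A : set B), closed A ->
     llp (set_val : set_type A -> B) f).
Proof.
move=> cf cs fs hU; split.
  split => // A B g [_ hg].
  apply: core cs fs hU _ _.
    exact: (@Mleft_inj A B g hg).
  exact: (@Mleft_closed A B g hg).
move=> B A cA; apply: core cs fs hU _ _.
  by move=> a1 a2; apply: val_inj.
exact: setval_closed.
Qed.
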